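(* Let $\mathcal{C}$ be an $(n,k,3)$ binary linear code. Then the extended code $\mathcal{C}'$ is an $(n+1,k,4)$ code with $$\rho(\mathcal{C}') \le 2\rho(\mathcal{C}) = 2r(\mathcal{C}') - 2.$$
   Context: An $(n,k,d)$ code is a linear code of length $n$, dimension $k$ and minimum Hamming distance $d$. The extended code $\mathcal{C}'$ of a binary code $\mathcal{C}$ of length $n$ is obtained by appending to each codeword an overall parity-check bit (the sum mod 2 of its coordinates). A parity-check matrix for a linear code $\mathcal{C}$ is any matrix (possibly with linearly dependent rows) whose rows span $\mathcal{C}^\perp$. The redundancy $r(\mathcal{C})$ is the minimum number of rows of a parity-check matrix for $\mathcal{C}$. For a parity-check matrix $H$, the stopping distance $s(H)$ is the largest integer such that for every set of $s(H)-1$ or fewer columns of $H$, the projection of $H$ onto those columns contains at least one row of Hamming weight exactly one. The stopping redundancy $\rho(\mathcal{C})$ is the smallest number of rows of a parity-check matrix $H$ for $\mathcal{C}$ with $s(H) = d(\mathcal{C})$, the minimum distance of $\mathcal{C}$. *)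

(* Defs.v *)
From HB Require Import structures.
From mathcomp Require Import all_boot all_order all_algebra.
Set Implicit Arguments. Unset Strict Implicit. Unset Printing Implicit Defensive.
Import GRing.Theory.
Local Open Scope ring_scope.

(* A binary linear code of length n is the row space of a matrix
   C : 'M['F_2]_(m, n); its dimension is \rank C. *)

Definition wt (n : nat) (v : 'rV['F_2]_n) : nat := #|[set j : 'I_n | v 0 j != 0]|.

(* d is the minimum distance of the (linear) code: the minimum weight of a
   nonzero codeword. *)
Definition is_min_dist (m n : nat) (C : 'M['F_2]_(m, n)) (d : nat) : Prop :=
  (exists v : 'rV['F_2]_n, (v <= C)%MS /\ v != 0 /\ wt v = d) /\
  (forall v : 'rV['F_2]_n, (v <= C)%MS -> v != 0 -> (d <= wt v)%N).

Definition dual_code (m n : nat) (C : 'M['F_2]_(m, n)) : 'M['F_2]_n := kermx C^T.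

(* H is a parity-check matrix of C: its rows span the dual code
   (rows may be linearly dependent). *)
Definition is_pcm (m n r : nat) (C : 'M['F_2]_(m, n)) (H : 'M['F_2]_(r, n)) : Prop :=
  (H == dual_code C)%MS.

(* Extended code: append the overall parity bit to every codeword.
   The map v |-> (v, sum v) is linear, so this is the row space of the
   generator matrix with the parity column appended. *)
Definition ext_code (m n : nat) (C : 'M['F_2]_(m, n)) : 'M['F_2]_(m, n + 1) :=
  row_mx C (\col_i (\sum_j C i j)).

Definition redundancy_is (m n : nat) (C : 'M['F_2]_(m, n)) (r : nat) : Prop :=
  (exists H : 'M['F_2]_(r, n), is_pcm C H) /\
  (forall (r' : nat) (H : 'M['F_2]_(r', n)), is_pcm C H -> (r <= r')%N).

Definition stop_ok (r n : nat) (H : 'M['F_2]_(r, n)) (s : nat) : Prop :=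
  forall S : {set 'I_n}, S != set0 -> (#|S| < s)%N ->
    exists i : 'I_r, #|[set j in S | H i j != 0]| = 1%N.

(* s(H) = s: s is the largest integer with the property stop_ok
   (stop_ok is downward closed in s). *)
Definition stopping_distance_is (r n : nat) (H : 'M['F_2]_(r, n)) (s : nat) : Prop :=
  stop_ok H s /\ ~ stop_ok H s.+1.

Definition good_pcm (m n r : nat) (C : 'M['F_2]_(m, n)) (H : 'M['F_2]_(r, n)) : Prop :=
  is_pcm C H /\ (forall d, is_min_dist C d -> stopping_distance_is H d).

Definition stopping_redundancy_is (m n : nat) (C : 'M['F_2]_(m, n)) (rho : nat) : Prop :=
  (exists H : 'M['F_2]_(rho, n), good_pcm C H) /\
  (forall (r' : nat) (H : 'M['F_2]_(r', n)), good_pcm C H -> (rho <= r')%N).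

(* Main.v *)
Require Import Defs.
From mathcomp Require Import all_boot all_order all_algebra.
From mathcomp Require Import zify.
From Stdlib Require Import Lia Classical.
Set Implicit Arguments. Unset Strict Implicit. Unset Printing Implicit Defensive.
Import GRing.Theory.
Local Open Scope ring_scope.

Lemma F2_01 (x : 'F_2) : x = (x != 0)%:R.
Proof. by case: x => [[|[|//]]] Hx //=; apply/val_inj. Qed.

Lemma F2_add_self (x : 'F_2) : x + x = 0.
Proof. by rewrite (F2_01 x); case: (x != 0); apply/val_inj. Qed.

Lemma F2_nat (c : nat) : (c%:R : 'F_2) = (odd c)%:R.
Proof.
elim: c => // c IH; rewrite mulrS IH /=.
by case: (odd c); apply/val_inj.
Qed.

Lemma F2_neq0 (x : 'F_2) : (x + 1 != 0) = (x == 0).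
Proof. by rewrite (F2_01 x); case: (x != 0) => //. Qed.

Lemma mx_add_self m n (A : 'M['F_2]_(m, n)) : A + A = 0.
Proof. by apply/matrixP => i j; rewrite !mxE F2_add_self. Qed.

Lemma sum_F2_card n (P : pred 'I_n) : \sum_(j < n | P j) (1 : 'F_2) = #|[set j | P j]|%:R.
Proof. by rewrite -big_set sumr_const. Qed.

Lemma card_split n (P : pred 'I_(n + 1)) :
  #|[set j | P j]| = (#|[set j : 'I_n | P (lshift 1 j)]| + P (rshift n ord0))%N.
Proof.
rewrite -!sum1_card.
rewrite (eq_bigl P); last by move=> j; rewrite in_set.
rewrite [in RHS](eq_bigl (fun j => P (lshift 1 j))); last by move=> j; rewrite in_set.
rewrite big_split_ord /=.
congr (_ + _)%N.
rewrite big_mkcond big_ord1.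
by case: (P _).
Qed.

Lemma F2_cases (x : 'F_2) : x = 0 \/ x = 1.
Proof. by rewrite (F2_01 x); case: (x != 0); [right|left]. Qed.

Lemma dotF2 r n (u : 'rV['F_2]_n) (A : 'M['F_2]_(r, n)) i :
  (u *m A^T) 0 i = #|[set j | (u 0 j != 0) && (A i j != 0)]|%:R.
Proof.
rewrite -sum_F2_card big_mkcond mxE; apply: eq_bigr => j _.
rewrite mxE.
by case: (F2_cases (u 0 j)) => ->; case: (F2_cases (A i j)) => ->; rewrite ?mulr0 ?mul0r ?mulr1 ?eqxx ?oner_eq0.
Qed.

Lemma pcm_orth m n r (C : 'M['F_2]_(m, n)) (H : 'M['F_2]_(r, n)) :
  is_pcm C H -> H *m C^T = 0.
Proof. by move=> /andP[HD _]; apply/sub_kermxP. Qed.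

Lemma dual_sub m n r (C : 'M['F_2]_(m, n)) (H : 'M['F_2]_(r, n)) :
  is_pcm C H -> (dual_code C <= H)%MS.
Proof. by move=> /andP[_ ->]. Qed.

Lemma rank_dual m n (C : 'M['F_2]_(m, n)) : \rank (dual_code C) = (n - \rank C)%N.
Proof. by rewrite /dual_code mxrank_ker mxrank_tr. Qed.

Lemma DD m n r (C : 'M['F_2]_(m, n)) (H : 'M['F_2]_(r, n)) (v : 'rV['F_2]_n) :
  is_pcm C H -> v *m H^T = 0 -> (v <= C)%MS.
Proof.
move=> pH vH.
have vD : (v <= kermx (dual_code C)^T)%MS.
  apply/sub_kermxP; case/submxP: (dual_sub pH) => X ->.
  by rewrite trmx_mul mulmxA vH mul0mx.
have CK : (C <= kermx (dual_code C)^T)%MS.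
  apply/sub_kermxP; by rewrite -(trmxK (C *m _)) trmx_mul trmxK /dual_code mulmx_ker trmx0.
have rk : \rank (kermx (dual_code C)^T) = \rank C.
  rewrite mxrank_ker mxrank_tr rank_dual.
  have := rank_leq_col C; lia.
have := mxrank_leqif_sup CK; rewrite rk => -[_]; rewrite eqxx => /esym KC.
exact: submx_trans vD KC.
Qed.

Lemma supp_neq0 n (v : 'rV['F_2]_n) : v != 0 -> [set j | v 0 j != 0] != set0.
Proof.
apply: contra => /eqP S0; apply/eqP/rowP => j; rewrite mxE.
apply/eqP; apply/negPn; apply/negP => Hj.
have : j \in [set j | v 0 j != 0] by rewrite inE.
by rewrite S0 inE.
Qed.

Lemma G1 m n r (C : 'M['F_2]_(m, n)) (H : 'M['F_2]_(r, n)) (v : 'rV['F_2]_n) :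
  is_pcm C H -> (v <= C)%MS -> v != 0 -> ~ stop_ok H (wt v).+1.
Proof.
move=> pH vC v0 st.
have [i Hi] := st _ (supp_neq0 v0) (ltnSn _).
have : (v *m H^T) 0 i = 0.
  case/submxP: vC => w ->.
  by rewrite -mulmxA -(trmxK C) -trmx_mul (pcm_orth pH) trmx0 mulmx0 mxE.
rewrite dotF2.
have -> : [set j | (v 0 j != 0) && (H i j != 0)] = [set j in [set j | v 0 j != 0] | H i j != 0].
  by apply/setP => j; rewrite !inE.
by rewrite Hi.
Qed.

Lemma G2 m n r (C : 'M['F_2]_(m, n)) (H : 'M['F_2]_(r, n)) :
  is_pcm C H -> (forall v : 'rV['F_2]_n, (v <= C)%MS -> v != 0 -> (3 <= wt v)%N) ->
  stop_ok H 3.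
Proof.
move=> pH md S S0 S3.
case: (boolP [exists i, #|[set j in S | H i j != 0]| == 1%N]) => [/existsP[i /eqP Hi]|].
  by exists i.
rewrite negb_exists => /forallP N1.
pose v : 'rV['F_2]_n := \row_j (j \in S)%:R.
have vS : forall j, (v 0 j != 0) = (j \in S).
  by move=> j; rewrite mxE; case: (j \in S).
have vH : v *m H^T = 0.
  apply/rowP => i; rewrite dotF2 [RHS]mxE.
  have -> : [set j | (v 0 j != 0) && (H i j != 0)] = [set j in S | H i j != 0].
    by apply/setP => j; rewrite !inE vS.
  have le : (#|[set j in S | H i j != 0%R]| <= #|S|)%N.
    by apply: subset_leq_card; apply/subsetP => j; rewrite inE => /andP[].
  have := N1 i; move: le S3.
  case: #|[set j in S | H i j != 0%R]| => [|[|[|c]]] //=; first by rewrite F2_nat.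
  move=> /leq_trans h /h; done.
have vC := DD pH vH.
have v0 : v != 0.
  case/set0Pn: S0 => x xS; apply/eqP => /rowP /(_ x); rewrite !mxE xS => /eqP.
  done.
have := md v vC v0.
rewrite /wt.
have -> : [set j | v 0 j != 0] = S by apply/setP => j; rewrite inE vS.
by move=> h; have := leq_ltn_trans h S3.
Qed.

Lemma ext_eq m n (C : 'M['F_2]_(m, n)) :
  ext_code C = C *m row_mx 1%:M (const_mx 1 : 'M_(n, 1)).
Proof.
rewrite mul_mx_row mulmx1 /ext_code; congr row_mx.
apply/matrixP => i j; rewrite !mxE; apply: eq_bigr => k _; by rewrite mxE mulr1.
Qed.

Lemma ext_rank m n (C : 'M['F_2]_(m, n)) : \rank (ext_code C) = \rank C.
Proof.
apply/eqP; rewrite eqn_leq; apply/andP; split.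
  by rewrite ext_eq mxrankM_maxl.
have {1}-> : C = ext_code C *m col_mx 1%:M 0.
  by rewrite /ext_code mul_row_col mulmx1 mulmx0 addr0.
exact: mxrankM_maxl.
Qed.

Definition extv n (v : 'rV['F_2]_n) : 'rV['F_2]_(n + 1) := row_mx v (v *m const_mx 1).

Lemma ext_sub m n (C : 'M['F_2]_(m, n)) (v' : 'rV['F_2]_(n + 1)) :
  (v' <= ext_code C)%MS -> exists v, (v <= C)%MS /\ v' = extv v.
Proof.
case/submxP => w ->; exists (w *m C); split; first exact: submxMl.
by rewrite ext_eq mulmxA mul_mx_row mulmx1.
Qed.

Lemma extv_sub m n (C : 'M['F_2]_(m, n)) (v : 'rV['F_2]_n) :
  (v <= C)%MS -> (extv v <= ext_code C)%MS.
Proof.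
case/submxP => w ->.
have -> : extv (w *m C) = w *m ext_code C by rewrite ext_eq mulmxA mul_mx_row mulmx1.
exact: submxMl.
Qed.

Lemma extv_wt n (v : 'rV['F_2]_n) : wt (extv v) = (wt v + odd (wt v))%N.
Proof.
rewrite /wt card_split; congr (_ + _)%N.
  by apply: eq_card => j; rewrite !inE row_mxEl.
rewrite row_mxEr.
have -> : (const_mx 1 : 'M['F_2]_(n, 1)) = (const_mx 1 : 'M['F_2]_(1, n))^T by rewrite trmx_const.
rewrite dotF2.
have -> : [set j | (v 0 j != 0) && ((const_mx 1 : 'M['F_2]_(1, n)) ord0 j != 0)] = [set j | v 0 j != 0].
  by apply/setP => j; rewrite !inE mxE oner_eq0 andbT.
by rewrite F2_nat; case: (odd _); rewrite ?oner_eq0 ?eqxx.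
Qed.

Lemma extv_eq0 n (v : 'rV['F_2]_n) : (extv v == 0) = (v == 0).
Proof.
apply/eqP/eqP => [h|->]; last by rewrite /extv mul0mx row_mx0.
by have := congr1 lsubmx h; rewrite /extv row_mxKl linear0.
Qed.

Lemma ext_min4 m n (C : 'M['F_2]_(m, n)) :
  is_min_dist C 3 -> is_min_dist (ext_code C) 4.
Proof.
case=> [[v [vC [v0 w3]]] md]; split.
  exists (extv v); split; first exact: extv_sub.
  by rewrite extv_eq0 extv_wt w3.
move=> v' /ext_sub [u [uC ->]]; rewrite extv_eq0 => u0.
have := md u uC u0; rewrite extv_wt.
case: (wt u) => [|[|[|[|k]]]] //=.
Qed.

Definition Hext r n (H : 'M['F_2]_(r, n)) : 'M['F_2]_(r + r, n + 1) :=
  col_mx (row_mx H 0) (row_mx (H + const_mx 1) (const_mx 1)).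

Lemma const_mul1 r n : (const_mx 1 : 'M['F_2]_(r, 1)) *m (const_mx 1 : 'M['F_2]_(1, n)) = const_mx 1.
Proof. by apply/matrixP => i j; rewrite !mxE big_ord1 !mxE mulr1. Qed.

Lemma Hext_R r n (H : 'M['F_2]_(r, n)) :
  Hext H *m (row_mx 1%:M (const_mx 1 : 'M_(n, 1)))^T = col_mx H H.
Proof.
rewrite /Hext mul_col_mx tr_row_mx trmx1 trmx_const !mul_row_col !mulmx1 mul0mx addr0.
by rewrite const_mul1 -addrA mx_add_self addr0.
Qed.

Lemma Hext_up r n (H : 'M['F_2]_(r, n)) : (row_mx H 0 <= Hext H)%MS.
Proof. by have := submx_refl (Hext H); rewrite /Hext col_mx_sub => /andP[]. Qed.

Lemma Hext_dn r n (H : 'M['F_2]_(r, n)) : (row_mx (H + const_mx 1) (const_mx 1) <= Hext H)%MS.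
Proof. by have := submx_refl (Hext H); rewrite /Hext col_mx_sub => /andP[]. Qed.

Lemma Hext_ones r n (H : 'M['F_2]_(r, n)) : (0 < r)%N -> ((const_mx 1 : 'rV['F_2]_(n + 1)) <= Hext H)%MS.
Proof.
move=> r0.
have S := addmx_sub (Hext_up H) (Hext_dn H).
rewrite add_row_mx addrA mx_add_self !add0r row_mx_const in S.
apply: submx_trans S.
have -> : (const_mx 1 : 'rV['F_2]_(n + 1)) = row (Ordinal r0) (const_mx 1) by apply/rowP => j; rewrite !mxE.
exact: row_sub.
Qed.

Lemma Hext_pcm m n r (C : 'M['F_2]_(m, n)) (H : 'M['F_2]_(r, n)) :
  is_pcm C H -> (0 < r)%N -> is_pcm (ext_code C) (Hext H).
Proof.
move=> pH r0; apply/andP; split.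
  apply/sub_kermxP.
  by rewrite ext_eq trmx_mul mulmxA Hext_R mul_col_mx (pcm_orth pH) col_mx0.
apply/row_subP => i.
set u := row i _.
have uK : u *m (ext_code C)^T = 0 by apply/sub_kermxP; exact: row_sub.
rewrite ext_eq trmx_mul mulmxA in uK.
set R := row_mx _ _ in uK.
have wH : (u *m R^T <= H)%MS.
  apply: submx_trans (dual_sub pH); exact/sub_kermxP.
rewrite -(hsubmxK u).
set a := lsubmx u; set b := rsubmx u.
have E : u *m R^T = a + b *m (const_mx 1 : 'M['F_2]_(n, 1))^T.
  by rewrite -(hsubmxK u) /R tr_row_mx trmx1 mul_row_col mulmx1.
have -> : row_mx a b = row_mx (u *m R^T) 0 + b *m row_mx (const_mx 1 : 'M['F_2]_(n, 1))^T 1%:M.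
  rewrite E mul_mx_row mulmx1 add_row_mx add0r -addrA mx_add_self addr0 //.
apply: addmx_sub.
  case/submxP: wH => z ->.
  have -> : row_mx (z *m H) (0 : 'M['F_2]_(1, 1)) = z *m row_mx H 0 by rewrite mul_mx_row mulmx0.
  exact: submx_trans (submxMl _ _) (Hext_up H).
apply: submx_trans (submxMl _ _) _.
have -> : row_mx (const_mx 1 : 'M['F_2]_(n, 1))^T 1%:M = (const_mx 1 : 'rV['F_2]_(n + 1)).
  rewrite trmx_const -row_mx_const; congr row_mx.
  by apply/matrixP => x y; rewrite !mxE !ord1.
exact: Hext_ones.
Qed.

Lemma card_split' n (S : {set 'I_(n + 1)}) (Q : pred 'I_(n + 1)) :
  #|[set j in S | Q j]| =
  (#|[set j : 'I_n | (lshift 1 j \in S) && Q (lshift 1 j)]| + ((rshift n ord0 \in S) && Q (rshift n ord0)))%N.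
Proof. by rewrite -(card_split (fun j => (j \in S) && Q j)); apply: eq_card => j; rewrite !inE. Qed.

Lemma card_compl n (L : {set 'I_n}) (P : pred 'I_n) :
  (#|[set j in L | P j]| + #|[set j in L | ~~ P j]|)%N = #|L|.
Proof.
rewrite -(cardsID [set j | P j] L); congr (_ + _)%N.
  apply: eq_card => j; rewrite !inE //.
apply: eq_card => j; rewrite !inE andbC //.
Qed.

Lemma Hext_stop m n r (C : 'M['F_2]_(m, n)) (H : 'M['F_2]_(r, n)) :
  is_pcm C H -> (0 < r)%N -> is_min_dist C 3 -> stop_ok H 3 -> stop_ok (Hext H) 4.
Proof.
move=> pH r0 md st S S0 S4.
case: (ltnP #|S| 3) => [S3 | S3'].
  apply: (G2 (Hext_pcm pH r0) _ S0 S3) => v vC v0.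
  have [_ h] := ext_min4 md.
  by have := h v vC v0; apply: ltnW.
have S3 : #|S| = 3%N by apply/eqP; rewrite eqn_leq S3' andbT -ltnS.
set L := [set j : 'I_n | lshift 1 j \in S].
set e := rshift n ord0 \in S.
have hS : #|S| = (#|L| + e)%N.
  rewrite -(card_split (fun j => j \in S)); apply: eq_card => j; by rewrite !inE.
have cU : forall i, #|[set j in S | Hext H (lshift r i) j != 0]| = #|[set j in L | H i j != 0]|.
  move=> i; rewrite card_split' /Hext !col_mxEu row_mxEr mxE eqxx andbF addn0.
  by apply: eq_card => j; rewrite !inE col_mxEu row_mxEl.
have cD : forall i, #|[set j in S | Hext H (rshift r i) j != 0]| = (#|[set j in L | H i j == 0%R]| + e)%N.
  move=> i; rewrite card_split' /Hext !col_mxEd row_mxEr mxE oner_eq0 andbT.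
  by congr (_ + _)%N; apply: eq_card => j; rewrite !inE col_mxEd row_mxEl !mxE F2_neq0.
case: (boolP e) => He.
  have L2 : #|L| = 2%N by move: hS; rewrite S3 He; lia.
  have L0 : L != set0 by rewrite -cards_eq0 L2.
  have [i Hi] := st L L0 ltac:(by rewrite L2).
  by exists (lshift r i); rewrite cU.
have L3 : #|L| = 3%N by move: hS; rewrite S3 (negbTE He); lia.
have [x xL] : exists x, x \in L by apply/set0Pn; rewrite -cards_eq0 L3.
set T := L :\ x.
have T2 : #|T| = 2%N by move: (cardsD1 x L); rewrite xL L3 /T; lia.
have T0 : T != set0 by rewrite -cards_eq0 T2.
have [i Hi] := st T T0 ltac:(by rewrite T2).
have F : #|[set j in L | H i j != 0]| = ((H i x != 0%R) + 1)%N.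
  rewrite (cardsD1 x) inE xL /=; congr (_ + _)%N.
  apply: etrans Hi; apply: eq_card => j; rewrite !inE; by case: (j == x); rewrite ?andbF.
case: (boolP (H i x != 0)) => hx; rewrite ?hx /= in F.
  exists (rshift r i); rewrite cD (negbTE He) addn0.
  have := card_compl L (fun j => H i j != 0).
  have -> : #|[set j in L | ~~ (H i j != 0)]| = #|[set j in L | H i j == 0]|.
    by apply: eq_card => j; rewrite !inE negbK.
  rewrite F L3; lia.
by exists (lshift r i); rewrite cU F (negbTE hx).
Qed.

Lemma min_ex (P : nat -> Prop) N : P N -> exists n, P n /\ forall m, P m -> (n <= m)%N.
Proof.
elim: N {-2}N (leqnn N) => [|N IH] M HM PM.
  have M0 : M = 0%N by lia.
  subst M; exists 0%N; split => // m _.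
case: (classic (exists m, (m < M)%N /\ P m)) => [[m [mM Pm]]|no].
  apply: (IH m) => //; lia.
exists M; split => // m Pm; case: (ltnP m M) => // mM.
by exfalso; apply: no; exists m.
Qed.

Lemma min_dist_uniq m n (C : 'M['F_2]_(m, n)) d1 d2 :
  is_min_dist C d1 -> is_min_dist C d2 -> d1 = d2.
Proof.
move=> [[v1 [c1 [n1 w1]]] h1] [[v2 [c2 [n2 w2]]] h2].
have := h1 v2 c2 n2; have := h2 v1 c1 n1; rewrite w1 w2; lia.
Qed.

Lemma pcm_rank m n r (C : 'M['F_2]_(m, n)) (H : 'M['F_2]_(r, n)) :
  is_pcm C H -> \rank H = \rank (dual_code C).
Proof. exact: eqmx_rank. Qed.

Lemma base_pcm m n (C : 'M['F_2]_(m, n)) : is_pcm C (row_base (dual_code C)).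
Proof. by apply/eqmxP; exact: eq_row_base. Qed.

Lemma rank_dual_pos m n (C : 'M['F_2]_(m, n)) :
  is_min_dist C 3 -> (0 < \rank (dual_code C))%N.
Proof.
move=> [[v [vC [v0 w3]]] md].
rewrite rank_dual; case: (ltnP (\rank C) n) => h; first lia.
have full : row_full C by rewrite /row_full eqn_leq rank_leq_col h.
case/set0Pn: (supp_neq0 v0) => j _.
have dC : ((delta_mx 0 j : 'rV['F_2]_n) <= C)%MS by apply: submx_full.
have d0 : (delta_mx 0 j : 'rV['F_2]_n) != 0.
  apply/eqP => /rowP /(_ j); rewrite !mxE !eqxx /= => /eqP; by rewrite oner_eq0.
have := md _ dC d0.
have -> : wt (delta_mx 0 j : 'rV['F_2]_n) = 1%N.
  rewrite /wt; apply: etrans (cards1 j); apply: eq_card => x; rewrite !inE !mxE eqxx /=.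
  by case: (x == j); rewrite ?oner_eq0 ?eqxx.
by [].
Qed.

Theorem theorem9 (n k m : nat) (C : 'M['F_2]_(m, n)) :
  \rank C = k -> is_min_dist C 3 ->
  \rank (ext_code C) = k /\ is_min_dist (ext_code C) 4 /\
  exists rho rho' r' : nat,
    [/\ stopping_redundancy_is C rho,
        stopping_redundancy_is (ext_code C) rho',
        redundancy_is (ext_code C) r',
        (rho' <= 2 * rho)%N &
        2 * rho = 2 * r' - 2]%N.
Proof.
move=> rk md.
have md4 := ext_min4 md.
split; first by rewrite ext_rank.
split; first exact: md4.
set H := row_base (dual_code C).
have pH : is_pcm C H := base_pcm C.
have r0 := rank_dual_pos md.
have gH : good_pcm C H.
  split => // d /(min_dist_uniq md) <-; split.
    apply: (G2 pH) => v vC v0; exact: md.2 v vC v0.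
  case: md.1 => v [vC [v0 w3]]; rewrite -w3; exact: G1 pH vC v0.
have pH' := Hext_pcm pH r0.
have gH' : good_pcm (ext_code C) (Hext H).
  split => // d /(min_dist_uniq md4) <-; split.
    apply: (Hext_stop pH r0 md); exact: (gH.2 3%N md).1.
  case: md4.1 => v [vC [v0 w4]]; rewrite -w4; exact: G1 pH' vC v0.
have [rho' [[H2 gH2] minr]] := @min_ex (fun r => exists H : 'M['F_2]_(r, n + 1), good_pcm (ext_code C) H) _ (ex_intro _ (Hext H) gH').
exists (\rank (dual_code C)), rho', (\rank (dual_code (ext_code C))); split.
- split; first by exists H.
  by move=> r' H3 [p3 _]; rewrite -(pcm_rank p3) rank_leq_row.
- split; first by exists H2.
  by move=> r' H3 g3; apply: minr; exists H3.
- split; first by exists (row_base (dual_code (ext_code C))); exact: base_pcm.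
  by move=> r' H3 p3; rewrite -(pcm_rank p3) rank_leq_row.
- have := minr _ (ex_intro _ (Hext H) gH'); lia.
- rewrite !rank_dual ext_rank; have := rank_leq_col C; lia.
Qed.
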